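(* Let $\alpha\in(0,\pi/2)$ and define $$\beta_0(\alpha)=\begin{cases}\alpha & \text{if } \alpha\in(0,\pi/6],\\ \tfrac12\arccos\!\left(\dfrac{-2\cos(4\alpha)+\cos(6\alpha)+2}{3-2\cos(4\alpha)}\right) & \text{if } \alpha\in(\pi/6,\pi/3),\\ 0 & \text{if } \alpha\in[\pi/3,\pi/2).\end{cases}$$ Then $\beta=\beta_0(\alpha)$ minimizes, over $\beta\in[0,\alpha]$, the competitive ratio of the $\beta$-Hedge algorithm with parameter $\beta$, and with this choice the competitive ratio equals $$\rho(\beta\text{-Hedge};\alpha)=\begin{cases}1/\cos\alpha & \text{if } \alpha\in(0,\pi/6),\\ f_1(\alpha,\beta_0,r_0(\alpha,\beta_0)) & \text{if } \alpha\in[\pi/6,\pi/3],\\ 1/\sin\alpha & \text{if } \alpha\in[\pi/3,\pi/2).\end{cases}$$ This bound is tight: it is attained by the adversarial choice $r=r_0(\alpha,\beta_0)$ of the right extent of the good input, where in particular $r_0=1$ if $\alpha\le\pi/6$ and $r_0=-\cos(2\alpha)$ if $\alpha\ge\pi/3$.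
   Context: Online drone coverage on a line. A drone has a fixed half angle-of-view $\alpha\in(0,\pi/2)$. A drone at a point $T=(t_x,t_y)$ with $t_y\ge 0$ covers the segment $[t_x-t_y\tan\alpha,\ t_x+t_y\tan\alpha]$ of the $x$-axis. For a point $X=(x,0)$ its feasibility cone is $\mathrm{FC}(X)=\{(u,v): v\ge 0,\ |u-x|\le v\tan\alpha\}$, and the feasibility cone of a finite set of points on the $x$-axis is the intersection of their cones. An input is a sequence of points $X_0=(0,0),X_1,\dots,X_n$ ($n\ge1$) on the $x$-axis, $X_i=(x_i,0)$, revealed one at a time. A solution is a sequence of drone positions $P_0=(0,0),P_1,\dots,P_n$ with $P_i\in \mathrm{FC}(X_0,\dots,X_i)$; its cost is $\sum_{i=0}^{n-1}|P_iP_{i+1}|$ (Euclidean). An online algorithm chooses $P_i$ knowing only $X_0,\dots,X_i$. $\mathrm{OPT}(\mathbf X;\alpha)$ is the minimum cost of a solution when the whole input is known in advance. A request $X_{i+1}$ is redundant if $x_{i+1}\in[\min_{j\le i}x_j,\max_{j\le i}x_j]$. An input is good if it has no redundant requests and is scaled (and possibly reflected) so that $\min_j x_j=-1$ and $r:=\max_j x_j\in[0,1]$. The competitive ratio is the supremum over good inputs of $\mathrm{ALG}(\mathbf X;\alpha)/\mathrm{OPT}(\mathbf X;\alpha)$. The $\beta$-Hedge algorithm with parameter $\beta\in[0,\alpha]$: if $P_{i-1}\in\mathrm{FC}(X_0,\dots,X_i)$ then $P_i=P_{i-1}$; otherwise the drone moves from $P_{i-1}$ along the ray making angle $\beta$ with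 the upward vertical and tilted toward the side of the new request (direction $(\operatorname{sgn}(x_i)\sin\beta,\cos\beta)$), and $P_i$ is the first point of this ray lying in $\mathrm{FC}(X_0,\dots,X_i)$. Define, for $\beta\in[0,\alpha]$ and $r\in[0,1]$, $$f_1(\alpha,\beta,r)=\frac{2\sin\alpha}{\cos\beta(\tan\alpha+\tan\beta)}\cdot\frac{1+\frac{2\tan\beta}{\tan\alpha+\tan\beta}\,r}{\sqrt{1+r^2+2\cos(2\alpha)\,r}},$$ and with $A=\frac{2\tan\beta}{\tan\alpha+\tan\beta}$, $B=2\cos(2\alpha)$, let $r_0(\alpha,\beta)=\frac{2A-B}{2-AB}$. *)

(* Defs.v *)
From Stdlib Require Import Reals Lra ClassicalEpsilon.
From Coquelicot Require Import Coquelicot.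
Open Scope R_scope.

(* An input X_0,...,X_n is given by n and x : nat -> R (only x 0..x n matter);
   X_i = (x i, 0). Drone positions are pairs (u,v) : R*R. *)

Definition in_FC (alpha : R) (x : nat -> R) (i : nat) (P : R * R) : Prop :=
  0 <= snd P /\ forall j, (j <= i)%nat -> Rabs (fst P - x j) <= snd P * tan alpha.

Definition dist2 (P Q : R * R) : R :=
  sqrt ((fst P - fst Q) ^ 2 + (snd P - snd Q) ^ 2).

Fixpoint path_cost (P : nat -> R * R) (n : nat) : R :=
  match n with
  | O => 0
  | S k => path_cost P k + dist2 (P k) (P (S k))
  end.

Definition feasible (alpha : R) (n : nat) (x : nat -> R) (P : nat -> R * R) : Prop :=
  P O = (0, 0) /\ forall i, (i <= n)%nat -> in_FC alpha x i (P i).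

Definition OPT (alpha : R) (n : nat) (x : nat -> R) : R :=
  real (Glb_Rbar (fun c => exists P, feasible alpha n x P /\ c = path_cost P n)).

Definition sgnR (y : R) : R :=
  if Rlt_dec 0 y then 1 else if Rlt_dec y 0 then -1 else 0.

Fixpoint hedge (alpha beta : R) (x : nat -> R) (i : nat) : R * R :=
  match i with
  | O => (0, 0)
  | S k =>
      let P := hedge alpha beta x k in
      if excluded_middle_informative (in_FC alpha x (S k) P) then P
      else
        let d := (sgnR (x (S k)) * sin beta, cos beta) in
        let t := real (Glb_Rbar (fun t => 0 <= t /\
                   in_FC alpha x (S k) (fst P + t * fst d, snd P + t * snd d))) in
        (fst P + t * fst d, snd P + t * snd d)
  end.

Definition ALG_hedge (alpha beta : R) (n : nat) (x : nat -> R) : R :=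
  path_cost (hedge alpha beta x) n.

(* good input with right extent r = max_j x_j:
   n >= 1, x_0 = 0, no redundant request, min_j x_j = -1, max_j x_j = r ∈ [0,1]. *)
Definition good_input_r (n : nat) (x : nat -> R) (r : R) : Prop :=
  (1 <= n)%nat /\ x O = 0 /\
  (forall i, (i < n)%nat ->
     (forall j, (j <= i)%nat -> x j < x (S i)) \/
     (forall j, (j <= i)%nat -> x (S i) < x j)) /\
  (exists j, (j <= n)%nat /\ x j = -1) /\ (forall j, (j <= n)%nat -> -1 <= x j) /\
  (exists j, (j <= n)%nat /\ x j = r) /\ (forall j, (j <= n)%nat -> x j <= r) /\
  0 <= r <= 1.

Definition good_input (n : nat) (x : nat -> R) : Prop :=
  exists r, good_input_r n x r.

Definition comp_ratio (alpha beta : R) : Rbar :=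
  Lub_Rbar (fun q => exists n x, good_input n x /\
                       q = ALG_hedge alpha beta n x / OPT alpha n x).

Definition comp_ratio_r (alpha beta r : R) : Rbar :=
  Lub_Rbar (fun q => exists n x, good_input_r n x r /\
                       q = ALG_hedge alpha beta n x / OPT alpha n x).

Definition f1 (alpha beta r : R) : R :=
  2 * sin alpha / (cos beta * (tan alpha + tan beta)) *
  ((1 + 2 * tan beta / (tan alpha + tan beta) * r) /
   sqrt (1 + r ^ 2 + 2 * cos (2 * alpha) * r)).

Definition r0 (alpha beta : R) : R :=
  let A := 2 * tan beta / (tan alpha + tan beta) in
  let B := 2 * cos (2 * alpha) in
  (2 * A - B) / (2 - A * B).

Definition beta0 (alpha : R) : R :=
  if Rle_dec alpha (PI / 6) then alpha
  else if Rlt_dec alpha (PI / 3) then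
    / 2 * acos ((- 2 * cos (4 * alpha) + cos (6 * alpha) + 2) / (3 - 2 * cos (4 * alpha)))
  else 0.

Definition rho_hedge (alpha : R) : R :=
  if Rlt_dec alpha (PI / 6) then / cos alpha
  else if Rle_dec alpha (PI / 3) then f1 alpha (beta0 alpha) (r0 alpha (beta0 alpha))
  else / sin alpha.

(* Main.v *)
Require Import Defs.
From Stdlib Require Import Reals Lra Psatz ClassicalEpsilon.
From Coquelicot Require Import Coquelicot.
Open Scope R_scope.

Lemma glb_bounds (E : R -> Prop) (m e0 : R) :
  E e0 -> (forall e, E e -> m <= e) ->
  m <= real (Glb_Rbar E) /\ (forall e, E e -> real (Glb_Rbar E) <= e).
Proof.
  intros He0 Hm.
  destruct (Glb_Rbar_correct E) as [H1 H2].
  assert (L1 : Rbar_le m (Glb_Rbar E)) by (apply H2; intros x Hx; simpl; apply Hm; auto).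
  assert (L2 : Rbar_le (Glb_Rbar E) e0) by (apply H1; auto).
  destruct (Glb_Rbar E) as [l| |]; simpl in *; try contradiction.
  split; [auto|]. intros e He. specialize (H1 e He). simpl in H1. auto.
Qed.

Lemma glb_min (E : R -> Prop) (m : R) :
  E m -> (forall e, E e -> m <= e) -> real (Glb_Rbar E) = m.
Proof.
  intros H1 H2. destruct (glb_bounds E m m H1 H2) as [A B].
  specialize (B m H1). lra.
Qed.

Lemma dist2_nonneg P Q : 0 <= dist2 P Q.
Proof. unfold dist2. apply sqrt_pos. Qed.

Lemma mink (a1 a2 b1 b2 : R) :
  sqrt ((a1 + b1) ^ 2 + (a2 + b2) ^ 2) <= sqrt (a1 ^ 2 + a2 ^ 2) + sqrt (b1 ^ 2 + b2 ^ 2).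
Proof.
  assert (HA : 0 <= a1 ^ 2 + a2 ^ 2) by (apply Rplus_le_le_0_compat; apply pow2_ge_0).
  assert (HB : 0 <= b1 ^ 2 + b2 ^ 2) by (apply Rplus_le_le_0_compat; apply pow2_ge_0).
  assert (HC : 0 <= (a1 + b1) ^ 2 + (a2 + b2) ^ 2) by (apply Rplus_le_le_0_compat; apply pow2_ge_0).
  pose proof (sqrt_sqrt _ HA). pose proof (sqrt_sqrt _ HB). pose proof (sqrt_sqrt _ HC).
  pose proof (sqrt_pos (a1 ^ 2 + a2 ^ 2)). pose proof (sqrt_pos (b1 ^ 2 + b2 ^ 2)).
  pose proof (sqrt_pos ((a1 + b1) ^ 2 + (a2 + b2) ^ 2)).
  generalize dependent (sqrt (a1 ^ 2 + a2 ^ 2)).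
  generalize dependent (sqrt (b1 ^ 2 + b2 ^ 2)).
  generalize dependent (sqrt ((a1 + b1) ^ 2 + (a2 + b2) ^ 2)).
  intros z Hz1 Hz2 y Hy1 Hy2 x Hx1 Hx2.
  assert (CS : a1 * b1 + a2 * b2 <= x * y).
  { assert (Hp : (a1 * b1 + a2 * b2) ^ 2 <= (x * y) ^ 2).
    { replace ((x * y) ^ 2) with ((x * x) * (y * y)) by ring. rewrite Hx1, Hy1.
      pose proof (pow2_ge_0 (a1 * b2 - a2 * b1)).
      assert (E : (a1 ^ 2 + a2 ^ 2) * (b1 ^ 2 + b2 ^ 2) - (a1 * b1 + a2 * b2) ^ 2 = (a1 * b2 - a2 * b1) ^ 2) by ring.
      lra. }
    assert (0 <= x * y) by (apply Rmult_le_pos; lra).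
    apply Rsqr_incr_0_var; [unfold Rsqr; simpl in Hp; lra | lra]. }
  apply Rsqr_incr_0_var; [| lra]. unfold Rsqr. rewrite Hz1.
  replace ((x + y) * (x + y)) with (y * y + x * x + 2 * (x * y)) by ring.
  rewrite Hx1, Hy1. lra.
Qed.

Lemma dist2_tri P Q S : dist2 P S <= dist2 P Q + dist2 Q S.
Proof.
  unfold dist2.
  replace (fst P - fst S) with ((fst P - fst Q) + (fst Q - fst S)) by ring.
  replace (snd P - snd S) with ((snd P - snd Q) + (snd Q - snd S)) by ring.
  apply mink.
Qed.

Lemma path_cost_ge P n : dist2 (P O) (P n) <= path_cost P n.
Proof.
  induction n as [|k IH]; simpl.
  - unfold dist2. replace ((fst (P O) - fst (P O)) ^ 2 + (snd (P O) - snd (P O)) ^ 2) with 0 by ring.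
    rewrite sqrt_0. lra.
  - pose proof (dist2_tri (P O) (P k) (P (S k))). lra.
Qed.

Lemma dist2_origin p v : dist2 (0, 0) (p, v) = sqrt (p ^ 2 + v ^ 2).
Proof. unfold dist2; simpl. f_equal; ring. Qed.
Lemma fc_lb1 (T p v : R) : 0 < T -> 1 <= v * T - p -> 1 / (1 + T ^ 2) <= p ^ 2 + v ^ 2.
Proof.
  intros HT H.
  assert (E : (1 + T ^ 2) * (v ^ 2 + p ^ 2) - (v * T - p) ^ 2 = (v + p * T) ^ 2) by ring.
  pose proof (pow2_ge_0 (v + p * T)).
  assert (H1 : 1 <= (v * T - p) ^ 2) by nra.
  assert (H2 : 0 < 1 + T ^ 2) by nra.
  apply (Rmult_le_reg_l (1 + T ^ 2)); auto.
  field_simplify; [| lra]. nra.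
Qed.

Definition Dsq (T r : R) := ((r - 1) ^ 2 * T ^ 2 + (1 + r) ^ 2) / (4 * T ^ 2).

Lemma fc_lb2 (T p v r : R) : 0 < T -> r <= 1 -> T ^ 2 - 1 <= r * (1 + T ^ 2) ->
  1 <= v * T - p -> r <= v * T + p -> Dsq T r <= p ^ 2 + v ^ 2.
Proof.
  intros HT Hr Hc Ha Hb.
  set (a := v * T - p - 1). set (b := v * T + p - r).
  assert (Ha0 : 0 <= a) by (unfold a; lra).
  assert (Hb0 : 0 <= b) by (unfold b; lra).
  assert (E : 4 * T ^ 2 * (p ^ 2 + v ^ 2) - ((r - 1) ^ 2 * T ^ 2 + (1 + r) ^ 2) =
     T ^ 2 * (b - a) ^ 2 + (a + b) ^ 2 + a * (2 * (1 + r) - 2 * T ^ 2 * (r - 1))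
     + b * (2 * T ^ 2 * (r - 1) + 2 * (1 + r))) by (unfold a, b; field; lra).
  assert (T2 : 0 < T ^ 2) by nra.
  assert (P1 : 0 <= T ^ 2 * (b - a) ^ 2) by (apply Rmult_le_pos; [lra | apply pow2_ge_0]).
  assert (P2 : 0 <= (a + b) ^ 2) by apply pow2_ge_0.
  assert (P3 : 0 <= a * (2 * (1 + r) - 2 * T ^ 2 * (r - 1))) by (apply Rmult_le_pos; nra).
  assert (P4 : 0 <= b * (2 * T ^ 2 * (r - 1) + 2 * (1 + r))) by (apply Rmult_le_pos; nra).
  unfold Dsq. apply (Rmult_le_reg_l (4 * T ^ 2)); [lra|].
  field_simplify; [| lra]. lra.
Qed.

Definition Efeas (alpha : R) (n : nat) (x : nat -> R) :=
  fun c => exists P, feasible alpha n x P /\ c = path_cost P n.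

Definition apexP (T r : R) : nat -> R * R :=
  fun i => match i with O => (0, 0) | S _ => ((r - 1) / 2, (1 + r) / (2 * T)) end.

Lemma dist2_self Q : dist2 Q Q = 0.
Proof. unfold dist2. replace ((fst Q - fst Q) ^ 2 + (snd Q - snd Q) ^ 2) with 0 by ring. apply sqrt_0. Qed.

Lemma apex_cost T r n : 0 < T -> (1 <= n)%nat -> path_cost (apexP T r) n = sqrt (Dsq T r).
Proof.
  intros HT Hn. induction n as [|k IH]; [lia|].
  destruct k as [|k].
  - simpl. rewrite Rplus_0_l. unfold dist2; simpl. unfold Dsq. f_equal. field. lra.
  - change (path_cost (apexP T r) (S (S k))) with
      (path_cost (apexP T r) (S k) + dist2 (apexP T r (S k)) (apexP T r (S (S k)))).
    rewrite IH by lia. change (apexP T r (S (S k))) with (apexP T r (S k)).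
    rewrite dist2_self. ring.
Qed.

Lemma abs_le_iff a b : Rabs a <= b <-> -b <= a <= b.
Proof. unfold Rabs; destruct (Rcase_abs a); split; intros; lra. Qed.

Lemma OPT_bounds alpha n x r : 0 < tan alpha -> good_input_r n x r ->
  sqrt (1 / (1 + tan alpha ^ 2)) <= OPT alpha n x /\
  (tan alpha ^ 2 - 1 <= r * (1 + tan alpha ^ 2) -> sqrt (Dsq (tan alpha) r) <= OPT alpha n x) /\
  OPT alpha n x <= sqrt (Dsq (tan alpha) r).
Proof.
  intros HT G.
  destruct G as (Hn & Hx0 & _ & (j1 & Hj1 & Hxj1) & Hlo & (j2 & Hj2 & Hxj2) & Hhi & Hr).
  set (T := tan alpha) in *.
  assert (Fe : Efeas alpha n x (sqrt (Dsq T r))).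
  { exists (apexP T r). split; [| symmetry; apply apex_cost; auto].
    split; [reflexivity|]. intros i Hi. destruct i as [|i].
    - split; simpl; [lra|]. intros j Hj. assert (j = O) by lia. subst j. rewrite Hx0.
      apply abs_le_iff. lra.
    - split; simpl.
      + apply Rmult_le_pos; [lra|]. apply Rlt_le, Rinv_0_lt_compat. lra.
      + intros j Hj. apply abs_le_iff. specialize (Hlo j ltac:(lia)). specialize (Hhi j ltac:(lia)).
        fold T. replace ((1 + r) / (2 * T) * T) with ((1 + r) / 2) by (field; lra). lra. }
  assert (LB : forall e, Efeas alpha n x e -> sqrt (1 / (1 + T ^ 2)) <= e /\
                 (T ^ 2 - 1 <= r * (1 + T ^ 2) -> sqrt (Dsq T r) <= e)).
  { intros e (P & (HP0 & HPf) & He). subst e.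
    pose proof (path_cost_ge P n) as Hpc. rewrite HP0 in Hpc.
    destruct (P n) as [p v] eqn:HPn. rewrite dist2_origin in Hpc.
    destruct (HPf n (le_n n)) as [Hv Hfc]. rewrite HPn in Hv, Hfc. simpl in Hv, Hfc.
    pose proof (Hfc j1 Hj1) as F1. pose proof (Hfc j2 Hj2) as F2.
    rewrite Hxj1 in F1. rewrite Hxj2 in F2. apply abs_le_iff in F1. apply abs_le_iff in F2.
    fold T in F1, F2.
    split.
    - eapply Rle_trans; [| exact Hpc]. apply sqrt_le_1_alt. apply fc_lb1; auto. lra.
    - intros Hc. eapply Rle_trans; [| exact Hpc]. apply sqrt_le_1_alt. apply fc_lb2; auto; lra. }
  destruct (glb_bounds (Efeas alpha n x) (sqrt (1 / (1 + T ^ 2))) _ Fe (fun e He => proj1 (LB e He))) as [L1 L2].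
  unfold OPT. fold (Efeas alpha n x).
  split; [exact L1|]. split; [| apply L2; exact Fe].
  intros Hc.
  destruct (glb_bounds (Efeas alpha n x) (sqrt (Dsq T r)) _ Fe (fun e He => proj2 (LB e He) Hc)) as [M1 _].
  exact M1.
Qed.

Lemma hedge_S alpha beta x k : hedge alpha beta x (S k) =
  (let P := hedge alpha beta x k in
      if excluded_middle_informative (in_FC alpha x (S k) P) then P
      else
        let d := (sgnR (x (S k)) * sin beta, cos beta) in
        let t := real (Glb_Rbar (fun t => 0 <= t /\
                   in_FC alpha x (S k) (fst P + t * fst d, snd P + t * snd d))) in
        (fst P + t * fst d, snd P + t * snd d)).
Proof. reflexivity. Qed.

Lemma sgnR_pos y : 0 < y -> sgnR y = 1.
Proof. intros H. unfold sgnR. destruct (Rlt_dec 0 y); [reflexivity | lra]. Qed.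
Lemma sgnR_neg y : y < 0 -> sgnR y = -1.
Proof. intros H. unfold sgnR. destruct (Rlt_dec 0 y); [lra|]. destruct (Rlt_dec y 0); [reflexivity | lra]. Qed.

Section Step.
Variables (alpha beta : R) (x : nat -> R).
Hypothesis HT : 0 < tan alpha.
Hypothesis Hsb : 0 <= sin beta.
Hypothesis Hcb : 0 < cos beta.
Hypothesis Hba : sin beta <= tan alpha * cos beta.

Lemma step_none k p v : hedge alpha beta x k = (p, v) -> 0 <= v ->
  (forall j, (j <= S k)%nat -> p - v * tan alpha <= x j <= p + v * tan alpha) ->
  hedge alpha beta x (S k) = (p, v).
Proof.
  intros Hk Hv Hall. rewrite hedge_S, Hk. cbv zeta.
  destruct (excluded_middle_informative _) as [_|n]; [reflexivity|].
  exfalso. apply n. split; [simpl; lra|]. intros j Hj. apply abs_le_iff. simpl.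
  specialize (Hall j Hj). lra.
Qed.

Lemma step_right k p v : hedge alpha beta x k = (p, v) -> 0 <= v ->
  (forall j, (j <= k)%nat -> p - v * tan alpha <= x j <= p + v * tan alpha) ->
  0 < x (S k) -> p + v * tan alpha < x (S k) ->
  hedge alpha beta x (S k) =
   (p + (x (S k) - p - v * tan alpha) / (sin beta + tan alpha * cos beta) * sin beta,
    v + (x (S k) - p - v * tan alpha) / (sin beta + tan alpha * cos beta) * cos beta).
Proof.
  intros Hk Hv Hall Hy Hout. rewrite hedge_S, Hk. cbv zeta.
  set (T := tan alpha) in *. set (y := x (S k)) in *.
  set (kk := sin beta + T * cos beta).
  assert (Hkk : 0 < kk) by (unfold kk; nra).
  destruct (excluded_middle_informative _) as [F|_].
  { exfalso. destruct F as [_ F]. specialize (F (S k) (le_n _)). apply abs_le_iff in F. simpl in F.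
    fold T y in F. lra. }
  rewrite (sgnR_pos y Hy). simpl fst; simpl snd.
  set (s := (y - p - v * T) / kk).
  assert (Hs0 : 0 <= s) by (unfold s; apply Rmult_le_pos; [lra | apply Rlt_le, Rinv_0_lt_compat; lra]).
  assert (Hsk : s * kk = y - p - v * T) by (unfold s; field; lra).
  rewrite (glb_min _ s).
  - f_equal; ring.
  - assert (F1 : p + s * sin beta - y = -((v + s * cos beta) * T))
      by (replace y with (s * kk + p + v * T) by lra; unfold kk; ring).
    assert (F2 : 0 <= (v + s * cos beta) * T) by (apply Rmult_le_pos; nra).
    assert (F4 : s * sin beta <= s * (T * cos beta)) by (apply Rmult_le_compat_l; lra).
    assert (F5 : 0 <= s * sin beta) by (apply Rmult_le_pos; lra).
    split; [exact Hs0|]. split; [simpl; nra|]. intros j Hj. apply abs_le_iff. simpl. fold T.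
    destruct (Nat.eq_dec j (S k)) as [->|Hne].
    + fold y. lra.
    + assert (Hj' : (j <= k)%nat) by lia. specialize (Hall j Hj'). lra.
  - intros e [He0 [_ He]]. specialize (He (S k) (le_n _)). apply abs_le_iff in He. simpl in He.
    fold T y in He.
    assert (Eq : e * kk - (y - p - v * T) = (v + e * cos beta) * T + (p + e * sin beta - y))
      by (unfold kk; ring).
    apply (Rmult_le_reg_r kk); [exact Hkk|]. lra.
Qed.

Lemma step_left k p v : hedge alpha beta x k = (p, v) -> 0 <= v ->
  (forall j, (j <= k)%nat -> p - v * tan alpha <= x j <= p + v * tan alpha) ->
  x (S k) < 0 -> x (S k) < p - v * tan alpha ->
  hedge alpha beta x (S k) =
   (p - (p - v * tan alpha - x (S k)) / (sin beta + tan alpha * cos beta) * sin beta,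
    v + (p - v * tan alpha - x (S k)) / (sin beta + tan alpha * cos beta) * cos beta).
Proof.
  intros Hk Hv Hall Hy Hout. rewrite hedge_S, Hk. cbv zeta.
  set (T := tan alpha) in *. set (y := x (S k)) in *.
  set (kk := sin beta + T * cos beta).
  assert (Hkk : 0 < kk) by (unfold kk; nra).
  destruct (excluded_middle_informative _) as [F|_].
  { exfalso. destruct F as [_ F]. specialize (F (S k) (le_n _)). apply abs_le_iff in F. simpl in F.
    fold T y in F. lra. }
  rewrite (sgnR_neg y Hy). simpl fst; simpl snd.
  set (s := (p - v * T - y) / kk).
  assert (Hs0 : 0 <= s) by (unfold s; apply Rmult_le_pos; [lra | apply Rlt_le, Rinv_0_lt_compat; lra]).
  assert (Hsk : s * kk = p - v * T - y) by (unfold s; field; lra).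
  rewrite (glb_min _ s).
  - f_equal; ring.
  - assert (F1 : p - s * sin beta - y = ((v + s * cos beta) * T))
      by (replace y with (p - v * T - s * kk) by lra; unfold kk; ring).
    assert (F2 : 0 <= (v + s * cos beta) * T) by (apply Rmult_le_pos; nra).
    assert (F4 : s * sin beta <= s * (T * cos beta)) by (apply Rmult_le_compat_l; lra).
    assert (F5 : 0 <= s * sin beta) by (apply Rmult_le_pos; lra).
    split; [exact Hs0|]. split; [simpl; nra|]. intros j Hj. apply abs_le_iff. simpl. fold T.
    destruct (Nat.eq_dec j (S k)) as [->|Hne].
    + fold y. lra.
    + assert (Hj' : (j <= k)%nat) by lia. specialize (Hall j Hj'). lra.
  - intros e [He0 [_ He]]. specialize (He (S k) (le_n _)). apply abs_le_iff in He. simpl in He.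
    fold T y in He.
    assert (Eq : e * kk - (p - v * T - y) = (v + e * cos beta) * T - (p - e * sin beta - y))
      by (unfold kk; ring).
    apply (Rmult_le_reg_r kk); [exact Hkk|]. lra.
Qed.

End Step.

Fixpoint mxx (x : nat -> R) (i : nat) : R :=
  match i with O => x O | S k => Rmax (mxx x k) (x (S k)) end.
Fixpoint mnx (x : nat -> R) (i : nat) : R :=
  match i with O => x O | S k => Rmin (mnx x k) (x (S k)) end.

Lemma mxx_ge x i j : (j <= i)%nat -> x j <= mxx x i.
Proof.
  induction i as [|i IH]; intros Hj.
  - assert (j = O) by lia. subst. simpl. lra.
  - simpl. destruct (Nat.eq_dec j (S i)) as [->|Hne].
    + apply Rmax_r.
    + eapply Rle_trans; [apply IH; lia | apply Rmax_l].
Qed.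
Lemma mnx_le x i j : (j <= i)%nat -> mnx x i <= x j.
Proof.
  induction i as [|i IH]; intros Hj.
  - assert (j = O) by lia. subst. simpl. lra.
  - simpl. destruct (Nat.eq_dec j (S i)) as [->|Hne].
    + apply Rmin_r.
    + eapply Rle_trans; [apply Rmin_l | apply IH; lia].
Qed.
Lemma mxx_att x i : exists j, (j <= i)%nat /\ mxx x i = x j.
Proof.
  induction i as [|i IH].
  - exists O. split; [lia | reflexivity].
  - destruct IH as [j [Hj E]]. simpl. unfold Rmax. destruct (Rle_dec (mxx x i) (x (S i))).
    + exists (S i). split; [lia | reflexivity].
    + exists j. split; [lia | exact E].
Qed.
Lemma mnx_att x i : exists j, (j <= i)%nat /\ mnx x i = x j.
Proof.
  induction i as [|i IH].
  - exists O. split; [lia | reflexivity].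
  - destruct IH as [j [Hj E]]. simpl. unfold Rmin. destruct (Rle_dec (mnx x i) (x (S i))).
    + exists j. split; [lia | exact E].
    + exists (S i). split; [lia | reflexivity].
Qed.

Lemma dist2_move p v s a b : 0 <= s -> a ^ 2 + b ^ 2 = 1 ->
  dist2 (p, v) (p + s * a, v + s * b) = s.
Proof.
  intros Hs Hab. unfold dist2; cbn [fst snd].
  replace ((p - (p + s * a)) ^ 2 + (v - (v + s * b)) ^ 2) with (s ^ 2) by
    (replace (s ^ 2) with (s ^ 2 * (a ^ 2 + b ^ 2)) by (rewrite Hab; ring); ring).
  apply sqrt_pow2; auto.
Qed.

Lemma sc1 b : sin b ^ 2 + cos b ^ 2 = 1.
Proof. pose proof (sin2_cos2 b). unfold Rsqr in H. lra. Qed.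

Section Inv.
Variables (alpha beta : R) (x : nat -> R) (n : nat).
Hypothesis HT : 0 < tan alpha.
Hypothesis Hsb : 0 <= sin beta.
Hypothesis Hcb : 0 < cos beta.
Hypothesis Hba : sin beta <= tan alpha * cos beta.
Variable lam : R.
Hypothesis Hlam : lam * (sin beta + tan alpha * cos beta) = tan alpha * cos beta - sin beta.
Hypothesis Hx0 : x O = 0.
Hypothesis Hnr : forall i, (i < n)%nat ->
     (forall j, (j <= i)%nat -> x j < x (S i)) \/
     (forall j, (j <= i)%nat -> x (S i) < x j).

Lemma lam_bounds : 0 <= lam <= 1.
Proof.
  set (T := tan alpha) in *. set (kk := sin beta + T * cos beta) in *.
  assert (Hkk : 0 < kk) by (unfold kk; nra).
  split.
  - apply (Rmult_le_reg_r kk); [lra|]. rewrite Hlam. lra.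
  - apply (Rmult_le_reg_r kk); [lra|]. rewrite Hlam. unfold kk. lra.
Qed.

Definition Inv (i : nat) : Prop :=
  exists p v, hedge alpha beta x i = (p, v) /\ 0 <= v /\
   let u := p + v * tan alpha in let w := v * tan alpha - p in
   let B := mxx x i in let A := - mnx x i in
   B <= u /\ A <= w /\ 0 <= u - lam * w <= (1 - lam ^ 2) * B /\
   0 <= w - lam * u <= (1 - lam ^ 2) * A /\ (u = B \/ w = A) /\
   path_cost (hedge alpha beta x) i = v / cos beta.

Lemma inv_all i : (i <= n)%nat -> Inv i.
Proof.
  pose proof lam_bounds as [Hl0 Hl1].
  set (T := tan alpha) in *. set (kk := sin beta + T * cos beta) in *.
  assert (Hkk : 0 < kk) by (unfold kk; nra).
  assert (Hl2 : 0 <= 1 - lam ^ 2) by nra.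
  induction i as [|i IH]; intros Hi.
  - exists 0, 0. simpl. rewrite Hx0. repeat split; try lra; try (left; lra); try (unfold Rdiv; ring).
  - destruct (IH ltac:(lia)) as (p & v & Hh & Hv & I1 & I2 & I3 & I4 & I5 & Hc).
    cbv zeta in *. fold T in I1, I2, I3, I4, I5.
    set (u := p + v * T) in *. set (w := v * T - p) in *.
    pose proof (mnx_le x i O ltac:(lia)) as Mn0. pose proof (mxx_ge x i O ltac:(lia)) as Mx0.
    rewrite Hx0 in Mn0, Mx0.
    assert (Hin : forall j, (j <= i)%nat -> p - v * tan alpha <= x j <= p + v * tan alpha).
    { intros j Hj. pose proof (mnx_le x i j Hj). pose proof (mxx_ge x i j Hj). fold T. unfold u, w in *. lra. }
    set (y := x (S i)).
    destruct (Hnr i ltac:(lia)) as [HR | HL].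
    +
      destruct (mxx_att x i) as [j0 [Hj0 Ej0]].
      pose proof (HR j0 Hj0) as Hy. rewrite <- Ej0 in Hy. fold y in Hy.
      assert (EB : mxx x (S i) = y) by (simpl; fold y; apply Rmax_right; lra).
      assert (EA : mnx x (S i) = mnx x i) by (simpl; fold y; apply Rmin_left; lra).
      destruct (Rle_lt_dec y u) as [Hyu | Hyu].
      * assert (Hh' : hedge alpha beta x (S i) = (p, v)).
        { apply step_none; auto. intros j Hj. destruct (Nat.eq_dec j (S i)) as [->|Hne].
          - fold y T. unfold u, w in *. lra.
          - apply Hin. lia. }
        exists p, v. split; [exact Hh'|]. split; [exact Hv|]. cbv zeta. fold T u w.
        rewrite EB, EA.
        assert (Hw : w = - mnx x i) by (destruct I5; [unfold u in *; lra | auto]).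
        assert (Hcost : path_cost (hedge alpha beta x) (S i) = v / cos beta).
        { change (path_cost (hedge alpha beta x) (S i)) with
             (path_cost (hedge alpha beta x) i + dist2 (hedge alpha beta x i) (hedge alpha beta x (S i))).
           rewrite Hc, Hh, Hh', dist2_self. ring. }
        repeat split; try lra; try nra; try (right; exact Hw); try exact Hcost.
      * set (s := (y - p - v * T) / kk).
        assert (Hs0 : 0 <= s) by (unfold s; apply Rmult_le_pos; [unfold u in Hyu; lra | apply Rlt_le, Rinv_0_lt_compat; lra]).
        assert (Hsk : s * kk = y - u) by (unfold s, u; field; lra).
        assert (Hh' : hedge alpha beta x (S i) = (p + s * sin beta, v + s * cos beta)).
        { apply step_right; auto; unfold y, T, u in *; lra. }
        exists (p + s * sin beta), (v + s * cos beta). split; [exact Hh'|].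
        split; [nra|]. cbv zeta. fold T. rewrite EB, EA.
        assert (Eu : p + s * sin beta + (v + s * cos beta) * T = y)
          by (replace y with (s * kk + u) by lra; unfold kk, u; ring).
        assert (Ew : (v + s * cos beta) * T - (p + s * sin beta) = w + lam * (y - u)).
        { rewrite <- Hsk. replace (lam * (s * kk)) with (s * (lam * kk)) by ring.
          rewrite Hlam. unfold w. ring. }
        rewrite Eu, Ew.
        assert (K1 : 0 <= lam * ((1 - lam ^ 2) * - mnx x i - (w - lam * u))) by (apply Rmult_le_pos; lra).
        assert (K2 : 0 <= (1 - lam ^ 2) * (y - lam * - mnx x i)) by (apply Rmult_le_pos; nra).
        assert (Hcost : path_cost (hedge alpha beta x) (S i) = (v + s * cos beta) / cos beta).
        { change (path_cost (hedge alpha beta x) (S i)) with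
             (path_cost (hedge alpha beta x) i + dist2 (hedge alpha beta x i) (hedge alpha beta x (S i))).
           rewrite Hc, Hh, Hh', dist2_move; auto; [field; lra | apply sc1]. }
        repeat split; try lra; try nra; try (left; reflexivity); try exact Hcost.
    +
      destruct (mnx_att x i) as [j0 [Hj0 Ej0]].
      pose proof (HL j0 Hj0) as Hy. rewrite <- Ej0 in Hy. fold y in Hy.
      assert (EB : mxx x (S i) = mxx x i) by (simpl; fold y; apply Rmax_left; lra).
      assert (EA : mnx x (S i) = y) by (simpl; fold y; apply Rmin_right; lra).
      destruct (Rle_lt_dec (- w) y) as [Hyu | Hyu].
      * assert (Hh' : hedge alpha beta x (S i) = (p, v)).
        { apply step_none; auto. intros j Hj. destruct (Nat.eq_dec j (S i)) as [->|Hne].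
          - fold y T. unfold u, w in *. lra.
          - apply Hin. lia. }
        exists p, v. split; [exact Hh'|]. split; [exact Hv|]. cbv zeta. fold T u w.
        rewrite EB, EA.
        assert (Hu : u = mxx x i) by (destruct I5; [auto | unfold w in *; lra]).
        assert (Hcost : path_cost (hedge alpha beta x) (S i) = v / cos beta).
        { change (path_cost (hedge alpha beta x) (S i)) with
             (path_cost (hedge alpha beta x) i + dist2 (hedge alpha beta x i) (hedge alpha beta x (S i))).
           rewrite Hc, Hh, Hh', dist2_self. ring. }
        repeat split; try lra; try nra; try (left; exact Hu); try exact Hcost.
      * set (s := (p - v * T - y) / kk).
        assert (Hs0 : 0 <= s) by (unfold s; apply Rmult_le_pos; [unfold w in Hyu; lra | apply Rlt_le, Rinv_0_lt_compat; lra]).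
        assert (Hsk : s * kk = - w - y) by (unfold s, w; field; lra).
        assert (Hh' : hedge alpha beta x (S i) = (p - s * sin beta, v + s * cos beta)).
        { apply step_left; auto.
          - unfold y in Hy. pose proof (Rlt_le_trans _ _ _ Hy Mn0). exact H.
          - unfold y, w, T in Hyu. lra. }
        exists (p - s * sin beta), (v + s * cos beta). split; [exact Hh'|].
        split; [nra|]. cbv zeta. fold T. rewrite EB, EA.
        assert (Ew : (v + s * cos beta) * T - (p - s * sin beta) = - y)
          by (replace y with (- w - s * kk) by lra; unfold kk, w; ring).
        assert (Eu : p - s * sin beta + (v + s * cos beta) * T = u + lam * (- w - y)).
        { rewrite <- Hsk. replace (lam * (s * kk)) with (s * (lam * kk)) by ring.
          rewrite Hlam. unfold u. ring. }
        rewrite Eu, Ew.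
        assert (K1 : 0 <= lam * ((1 - lam ^ 2) * mxx x i - (u - lam * w))) by (apply Rmult_le_pos; lra).
        assert (K2 : 0 <= (1 - lam ^ 2) * (- y - lam * mxx x i)) by (apply Rmult_le_pos; nra).
        assert (Hcost : path_cost (hedge alpha beta x) (S i) = (v + s * cos beta) / cos beta).
        { change (path_cost (hedge alpha beta x) (S i)) with
             (path_cost (hedge alpha beta x) i + dist2 (hedge alpha beta x i) (hedge alpha beta x (S i))).
           rewrite Hc, Hh, Hh'.
           replace (p - s * sin beta, v + s * cos beta) with (p + s * (- sin beta), v + s * cos beta) by (f_equal; ring).
           rewrite dist2_move; auto; [field; lra | pose proof (sc1 beta); nra]. }
        repeat split; try lra; try nra; try (right; ring); try exact Hcost.
Qed.

End Inv.

Lemma mxx_eq x n r : (exists j, (j <= n)%nat /\ x j = r) -> (forall j, (j <= n)%nat -> x j <= r) -> mxx x n = r.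
Proof.
  intros [j [Hj E]] H. destruct (mxx_att x n) as [k [Hk Ek]].
  pose proof (mxx_ge x n j Hj). specialize (H k Hk). lra.
Qed.
Lemma mnx_eq x n r : (exists j, (j <= n)%nat /\ x j = r) -> (forall j, (j <= n)%nat -> r <= x j) -> mnx x n = r.
Proof.
  intros [j [Hj E]] H. destruct (mnx_att x n) as [k [Hk Ek]].
  pose proof (mnx_le x n j Hj). specialize (H k Hk). lra.
Qed.

Lemma alg_bound alpha beta n x r lam :
  0 < tan alpha -> 0 <= sin beta -> 0 < cos beta -> sin beta <= tan alpha * cos beta ->
  lam * (sin beta + tan alpha * cos beta) = tan alpha * cos beta - sin beta ->
  good_input_r n x r ->
  ALG_hedge alpha beta n x <= (1 + (1 - lam) * r) / (sin beta + tan alpha * cos beta).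
Proof.
  intros HT Hsb Hcb Hba Hlam G.
  pose proof G as (Hn & Hx0 & Hnr & Hlo1 & Hlo & Hhi1 & Hhi & Hr).
  pose proof (lam_bounds alpha beta HT Hsb Hcb Hba lam Hlam) as [Hl0 Hl1].
  destruct (inv_all alpha beta x n HT Hsb Hcb Hba lam Hlam Hx0 Hnr n (le_n n))
    as (p & v & Hh & Hv & I1 & I2 & I3 & I4 & I5 & Hc).
  cbv zeta in *.
  rewrite (mxx_eq x n r Hhi1 Hhi) in *.
  rewrite (mnx_eq x n (-1) Hlo1 Hlo) in *.
  unfold ALG_hedge. rewrite Hc.
  set (T := tan alpha) in *. set (kk := sin beta + T * cos beta) in *.
  assert (Hkk : 0 < kk) by (unfold kk; nra).
  assert (HW : (p + v * T) + (v * T - p) <= (1 + lam) * (1 + (1 - lam) * r)).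
  { destruct I5 as [E|E]; nra. }
  assert (E2 : (1 + lam) * kk = 2 * T * cos beta) by (unfold kk in *; lra).
  apply (Rmult_le_reg_r (2 * T * cos beta)); [nra|].
  replace (v / cos beta * (2 * T * cos beta)) with ((p + v * T) + (v * T - p)) by (field; lra).
  rewrite <- E2.
  replace ((1 + (1 - lam) * r) / kk * ((1 + lam) * kk)) with ((1 + lam) * (1 + (1 - lam) * r)) by (field; lra).
  exact HW.
Qed.

Definition seq2 (r : R) : nat -> R := fun i => match i with O => 0 | S O => r | _ => -1 end.
Definition seq1 : nat -> R := fun i => match i with O => 0 | _ => -1 end.

Lemma seq2_good r : 0 < r <= 1 -> good_input_r 2 (seq2 r) r.
Proof.
  intros Hr. unfold good_input_r. repeat split.
  - lia.
  - intros i Hi. destruct i as [|[|i]]; [left | right | lia]; intros j Hj; simpl.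
    + assert (j = O) by lia. subst. simpl. lra.
    + destruct j as [|[|j]]; simpl; try lra; lia.
  - exists 2%nat. split; [lia | reflexivity].
  - intros j Hj. destruct j as [|[|j]]; simpl; lra.
  - exists 1%nat. split; [lia | reflexivity].
  - intros j Hj. destruct j as [|[|j]]; simpl; lra.
  - lra.
  - lra.
Qed.

Lemma seq1_good : good_input_r 1 seq1 0.
Proof.
  unfold good_input_r. repeat split.
  - lia.
  - intros i Hi. destruct i as [|i]; [right | lia]. intros j Hj. assert (j = O) by lia. subst. simpl. lra.
  - exists 1%nat. split; [lia | reflexivity].
  - intros j Hj. destruct j as [|j]; simpl; lra.
  - exists 0%nat. split; [lia | reflexivity].
  - intros j Hj. destruct j as [|j]; simpl; lra.
  - lra.
  - lra.
Qed.

Lemma alg_seq1 alpha beta :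
  0 < tan alpha -> 0 <= sin beta -> 0 < cos beta -> sin beta <= tan alpha * cos beta ->
  ALG_hedge alpha beta 1 seq1 = 1 / (sin beta + tan alpha * cos beta).
Proof.
  intros HT Hsb Hcb Hba.
  assert (Hkk : 0 < sin beta + tan alpha * cos beta) by nra.
  assert (H0 : hedge alpha beta seq1 0 = (0, 0)) by reflexivity.
  pose proof (step_left alpha beta seq1 HT Hsb Hcb Hba 0 0 0 H0 ltac:(lra)) as H1.
  simpl seq1 in H1.
  assert (Hin : forall j, (j <= 0)%nat -> 0 - 0 * tan alpha <= seq1 j <= 0 + 0 * tan alpha).
  { intros j Hj. assert (j = O) by lia. subst. simpl. lra. }
  specialize (H1 Hin ltac:(lra) ltac:(lra)).
  unfold ALG_hedge.
  change (path_cost (hedge alpha beta seq1) 1) with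
    (0 + dist2 (hedge alpha beta seq1 0) (hedge alpha beta seq1 1)).
  rewrite H0, H1.
  replace (0 - (0 - 0 * tan alpha - -1) / (sin beta + tan alpha * cos beta) * sin beta,
           0 + (0 - 0 * tan alpha - -1) / (sin beta + tan alpha * cos beta) * cos beta)
    with (0 + (1 / (sin beta + tan alpha * cos beta)) * (- sin beta),
          0 + (1 / (sin beta + tan alpha * cos beta)) * cos beta) by (f_equal; field; lra).
  rewrite dist2_move.
  - ring.
  - apply Rlt_le. apply Rdiv_lt_0_compat; lra.
  - pose proof (sc1 beta). nra.
Qed.

Section Seq2.
Variables (alpha beta r lam : R).
Notation T := (tan alpha).
Notation kk := (sin beta + tan alpha * cos beta).
Hypotheses (HT : 0 < tan alpha) (Hsb : 0 <= sin beta) (Hcb : 0 < cos beta)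
  (Hba : sin beta <= tan alpha * cos beta)
  (Hlam : lam * (sin beta + tan alpha * cos beta) = tan alpha * cos beta - sin beta)
  (Hr : 0 < r <= 1).

Lemma alg_seq2 : ALG_hedge alpha beta 2 (seq2 r) = (1 + (1 - lam) * r) / kk.
Proof.
  pose proof (lam_bounds alpha beta HT Hsb Hcb Hba lam Hlam) as [Hl0 Hl1].
  assert (Hkk : 0 < kk) by nra.
  assert (H0 : hedge alpha beta (seq2 r) 0 = (0, 0)) by reflexivity.
  assert (Hin0 : forall j, (j <= 0)%nat -> 0 - 0 * T <= seq2 r j <= 0 + 0 * T).
  { intros j Hj. assert (j = O) by lia. subst. simpl. lra. }
  pose proof (step_right alpha beta (seq2 r) HT Hsb Hcb Hba 0 0 0 H0 ltac:(lra) Hin0) as H1.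
  simpl seq2 in H1. specialize (H1 ltac:(lra) ltac:(lra)).
  assert (E1 : (r - 0 - 0 * T) / kk = r / kk) by (field; lra).
  rewrite E1 in H1.
  assert (Hs1 : 0 <= r / kk) by (apply Rlt_le, Rdiv_lt_0_compat; lra).
  assert (C1 : dist2 (hedge alpha beta (seq2 r) 0) (hedge alpha beta (seq2 r) 1) = r / kk).
  { rewrite H0, H1. apply dist2_move; auto. apply sc1. }
  assert (Hlk : 0 + r / kk * sin beta - (0 + r / kk * cos beta) * T = - (lam * r)).
  { replace (0 + r / kk * sin beta - (0 + r / kk * cos beta) * T) with (- (r / kk) * (T * cos beta - sin beta)) by ring.
    rewrite <- Hlam. field. lra. }
  assert (Ev : 0 + r / kk * sin beta + (0 + r / kk * cos beta) * T = r) by (field; lra).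
  assert (Hin1 : forall j, (j <= 1)%nat ->
     (0 + r / kk * sin beta) - (0 + r / kk * cos beta) * T <= seq2 r j <=
     (0 + r / kk * sin beta) + (0 + r / kk * cos beta) * T).
  { intros j Hj. rewrite Hlk, Ev.
    destruct j as [|[|j]]; [| | lia]; simpl; split; nra. }
  assert (Hv1 : 0 <= 0 + r / kk * cos beta) by nra.
  unfold ALG_hedge.
  change (path_cost (hedge alpha beta (seq2 r)) 2) with
    (0 + dist2 (hedge alpha beta (seq2 r) 0) (hedge alpha beta (seq2 r) 1)
       + dist2 (hedge alpha beta (seq2 r) 1) (hedge alpha beta (seq2 r) 2)).
  rewrite C1.
  destruct (Rlt_le_dec (lam * r) 1) as [Hlr | Hlr].
  - pose proof (step_left alpha beta (seq2 r) HT Hsb Hcb Hba 1 _ _ H1 Hv1 Hin1) as H2.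
    simpl seq2 in H2. specialize (H2 ltac:(lra) ltac:(lra)).
    rewrite Hlk in H2.
    replace (0 + r / kk * sin beta - (- (lam * r) - -1) / kk * sin beta,
             0 + r / kk * cos beta + (- (lam * r) - -1) / kk * cos beta)
      with ((0 + r / kk * sin beta) + ((1 - lam * r) / kk) * (- sin beta),
            (0 + r / kk * cos beta) + ((1 - lam * r) / kk) * cos beta) in H2
      by (f_equal; field; lra).
    rewrite H1, H2, dist2_move.
    + field. lra.
    + apply Rlt_le, Rdiv_lt_0_compat; lra.
    + pose proof (sc1 beta). nra.
  - assert (lam = 1 /\ r = 1) as [El Er] by (split; nra).
    assert (Hin2 : forall j, (j <= 2)%nat ->
       (0 + r / kk * sin beta) - (0 + r / kk * cos beta) * T <= seq2 r j <=
       (0 + r / kk * sin beta) + (0 + r / kk * cos beta) * T).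
    { intros j Hj. destruct j as [|[|[|j]]]; [apply Hin1; lia | apply Hin1; lia | | lia].
      rewrite Hlk, Ev. simpl. nra. }
    pose proof (step_none alpha beta (seq2 r) 1 _ _ H1 Hv1 Hin2) as H2.
    rewrite H1, H2, dist2_self. rewrite El, Er. field. lra.
Qed.
End Seq2.

Lemma sq_le_sqrt X rho Y : 0 <= X -> 0 <= rho -> 0 <= Y -> X ^ 2 <= rho ^ 2 * Y -> X <= rho * sqrt Y.
Proof.
  intros HX Hr HY H. pose proof (sqrt_sqrt Y HY). pose proof (sqrt_pos Y).
  apply Rsqr_incr_0_var; [| apply Rmult_le_pos; auto]. unfold Rsqr.
  replace (rho * sqrt Y * (rho * sqrt Y)) with (rho ^ 2 * (sqrt Y * sqrt Y)) by ring.
  rewrite H0. simpl in H. lra.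
Qed.

Lemma sqrt_le_sq X rho Y : 0 <= X -> 0 <= rho -> 0 <= Y -> rho ^ 2 * Y <= X ^ 2 -> rho * sqrt Y <= X.
Proof.
  intros HX Hr HY H. pose proof (sqrt_sqrt Y HY). pose proof (sqrt_pos Y).
  apply Rsqr_incr_0_var; [| auto]. unfold Rsqr.
  replace (rho * sqrt Y * (rho * sqrt Y)) with (rho ^ 2 * (sqrt Y * sqrt Y)) by ring.
  rewrite H0. simpl in H. lra.
Qed.

Definition kkf (alpha beta : R) := sin beta + tan alpha * cos beta.
Definition lamf (alpha beta : R) := (tan alpha * cos beta - sin beta) / kkf alpha beta.
Definition muf (alpha beta : R) := 1 - lamf alpha beta.
Definition Nf (T mu : R) := (1 - mu) ^ 2 + T ^ 2 * (1 + mu) ^ 2.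

Definition validb (alpha beta : R) :=
  0 < tan alpha /\ 0 <= sin beta /\ 0 < cos beta /\ sin beta <= tan alpha * cos beta.

Lemma kkf_pos alpha beta : validb alpha beta -> 0 < kkf alpha beta.
Proof. intros (H1 & H2 & H3 & H4). unfold kkf. nra. Qed.

Lemma lamf_eq alpha beta : validb alpha beta ->
  lamf alpha beta * (sin beta + tan alpha * cos beta) = tan alpha * cos beta - sin beta.
Proof. intros V. pose proof (kkf_pos _ _ V). unfold lamf, kkf in *. field. lra. Qed.

Lemma muf_bounds alpha beta : validb alpha beta -> 0 <= muf alpha beta <= 1.
Proof.
  intros V. pose proof V as (H1 & H2 & H3 & H4).
  pose proof (lam_bounds alpha beta H1 H2 H3 H4 _ (lamf_eq _ _ V)). unfold muf. lra.
Qed.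

Lemma muf_eq alpha beta : validb alpha beta -> muf alpha beta * kkf alpha beta = 2 * sin beta.
Proof. intros V. pose proof (kkf_pos _ _ V). unfold muf, lamf in *. unfold kkf in *. field. lra. Qed.

Lemma ratio_ub alpha beta rho n x : validb alpha beta -> 0 <= rho ->
  Nf (tan alpha) (muf alpha beta) <= rho ^ 2 * kkf alpha beta ^ 2 ->
  good_input n x -> ALG_hedge alpha beta n x / OPT alpha n x <= rho.
Proof.
  intros V Hrho HN [r G].
  pose proof V as (HT & Hsb & Hcb & Hba).
  pose proof (alg_bound alpha beta n x r _ HT Hsb Hcb Hba (lamf_eq _ _ V) G) as HA.
  fold (kkf alpha beta) in HA. replace (1 - lamf alpha beta) with (muf alpha beta) in HA by reflexivity.
  pose proof (OPT_bounds alpha n x r HT G) as (O1 & O2 & O3).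
  pose proof (kkf_pos _ _ V) as Hkk. pose proof (muf_bounds _ _ V) as Hmu.
  pose proof G as (_ & _ & _ & _ & _ & _ & _ & Hr).
  set (T := tan alpha) in *. set (kk := kkf alpha beta) in *. set (mu := muf alpha beta) in *.
  set (A := ALG_hedge alpha beta n x) in *. set (O := OPT alpha n x) in *.
  assert (HT2 : 0 < 1 + T ^ 2) by nra.
  assert (HO : 0 < O).
  { eapply Rlt_le_trans; [| exact O1]. apply sqrt_lt_R0. apply Rdiv_lt_0_compat; lra. }
  apply (Rmult_le_reg_r O); [exact HO|]. unfold Rdiv. rewrite Rmult_assoc, Rinv_l by lra. rewrite Rmult_1_r.
  eapply Rle_trans; [exact HA|].
  assert (X0 : 0 <= (1 + mu * r) / kk) by (apply Rmult_le_pos; [nra | apply Rlt_le, Rinv_0_lt_compat; lra]).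
  destruct (Rle_lt_dec (T ^ 2 - 1) (r * (1 + T ^ 2))) as [Hc | Hc].
  - specialize (O2 Hc).
    apply Rle_trans with (rho * sqrt (Dsq T r)); [| apply Rmult_le_compat_l; lra].
    apply sq_le_sqrt; auto.
    + unfold Dsq. apply Rmult_le_pos; [nra | apply Rlt_le, Rinv_0_lt_compat; nra].
    + unfold Dsq. set (M := (r - 1) ^ 2 * T ^ 2 + (1 + r) ^ 2).
      assert (HM : 0 <= M) by (unfold M; nra).
      assert (Id : Nf T mu * M - 4 * T ^ 2 * (1 + mu * r) ^ 2 =
         (r * (1 + T ^ 2 - mu * (1 - T ^ 2)) - (mu * (1 + T ^ 2) - 1 + T ^ 2)) ^ 2)
        by (unfold Nf, M; ring).
      pose proof (pow2_ge_0 (r * (1 + T ^ 2 - mu * (1 - T ^ 2)) - (mu * (1 + T ^ 2) - 1 + T ^ 2))).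
      assert (K : 4 * T ^ 2 * (1 + mu * r) ^ 2 <= rho ^ 2 * kk ^ 2 * M).
      { assert (Nf T mu * M <= rho ^ 2 * kk ^ 2 * M) by (apply Rmult_le_compat_r; lra). lra. }
      replace (((1 + mu * r) / kk) ^ 2) with ((4 * T ^ 2 * (1 + mu * r) ^ 2) / (4 * T ^ 2 * kk ^ 2)) by (field; lra).
      replace (rho ^ 2 * (M / (4 * T ^ 2))) with ((rho ^ 2 * kk ^ 2 * M) / (4 * T ^ 2 * kk ^ 2)) by (field; lra).
      assert (P4 : 0 < 4 * T ^ 2 * kk ^ 2).
      { apply Rmult_lt_0_compat; [apply Rmult_lt_0_compat; [lra | apply pow_lt; lra] | apply pow_lt; lra]. }
      apply Rmult_le_compat_r; [apply Rlt_le, Rinv_0_lt_compat; exact P4 | exact K].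
  -
    apply Rle_trans with (rho * sqrt (1 / (1 + T ^ 2))); [| apply Rmult_le_compat_l; lra].
    apply sq_le_sqrt; auto.
    + apply Rlt_le, Rdiv_lt_0_compat; lra.
    + assert (B1 : (1 + mu * r) * (1 + T ^ 2) <= 1 + T ^ 2 + mu * (T ^ 2 - 1)) by nra.
      assert (B2 : 0 <= (1 + mu * r) * (1 + T ^ 2)) by nra.
      assert (B3 : ((1 + mu * r) * (1 + T ^ 2)) ^ 2 <= (1 + T ^ 2 + mu * (T ^ 2 - 1)) ^ 2) by nra.
      assert (Id : Nf T mu * (1 + T ^ 2) - (1 + T ^ 2 + mu * (T ^ 2 - 1)) ^ 2 = 4 * T ^ 2 * mu ^ 2)
        by (unfold Nf; ring).
      assert (K : (1 + mu * r) ^ 2 * (1 + T ^ 2) <= rho ^ 2 * kk ^ 2).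
      { assert (0 <= 4 * T ^ 2 * mu ^ 2) by nra.
        assert (((1 + mu * r) * (1 + T ^ 2)) ^ 2 = (1 + mu * r) ^ 2 * (1 + T ^ 2) * (1 + T ^ 2)) by ring.
        assert ((1 + mu * r) ^ 2 * (1 + T ^ 2) * (1 + T ^ 2) <= Nf T mu * (1 + T ^ 2)) by lra.
        assert ((1 + mu * r) ^ 2 * (1 + T ^ 2) <= Nf T mu).
        { apply (Rmult_le_reg_r (1 + T ^ 2)); lra. }
        lra. }
      replace (((1 + mu * r) / kk) ^ 2) with (((1 + mu * r) ^ 2 * (1 + T ^ 2)) / (kk ^ 2 * (1 + T ^ 2))) by (field; lra).
      replace (rho ^ 2 * (1 / (1 + T ^ 2))) with ((rho ^ 2 * kk ^ 2) / (kk ^ 2 * (1 + T ^ 2))) by (field; lra).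
      assert (P4 : 0 < kk ^ 2 * (1 + T ^ 2)).
      { apply Rmult_lt_0_compat; [apply pow_lt; lra | lra]. }
      apply Rmult_le_compat_r; [apply Rlt_le, Rinv_0_lt_compat; exact P4 | exact K].
Qed.

Definition r0T (T mu : R) := (mu * (1 + T ^ 2) - (1 - T ^ 2)) / ((1 + T ^ 2) - mu * (1 - T ^ 2)).

Lemma r0T_props T mu : 0 < T -> 0 <= mu <= 1 -> 1 - T ^ 2 < mu * (1 + T ^ 2) ->
  0 < r0T T mu <= 1 /\ T ^ 2 - 1 <= r0T T mu * (1 + T ^ 2) /\
  r0T T mu * ((1 + T ^ 2) - mu * (1 - T ^ 2)) = mu * (1 + T ^ 2) - (1 - T ^ 2).
Proof.
  intros HT Hmu Hc.
  assert (HD : 0 < (1 + T ^ 2) - mu * (1 - T ^ 2)).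
  { destruct (Rle_lt_dec 0 (1 - T ^ 2)); nra. }
  unfold r0T. set (D := (1 + T ^ 2) - mu * (1 - T ^ 2)) in *.
  set (Nm := mu * (1 + T ^ 2) - (1 - T ^ 2)).
  assert (HN : 0 < Nm) by (unfold Nm; lra).
  split; [split|split].
  - apply Rdiv_lt_0_compat; lra.
  - apply (Rmult_le_reg_r D); [lra|]. unfold Rdiv. rewrite Rmult_assoc, Rinv_l by lra.
    unfold Nm, D. lra.
  - apply (Rmult_le_reg_r D); [lra|].
    replace (Nm / D * (1 + T ^ 2) * D) with (Nm * (1 + T ^ 2)) by (field; lra).
    assert (E : Nm * (1 + T ^ 2) - (T ^ 2 - 1) * D = 4 * T ^ 2 * mu) by (unfold Nm, D; ring).
    nra.
  - field. lra.
Qed.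

Lemma lub_ge (E : R -> Prop) (q rho : R) : E q -> rho <= q -> Rbar_le (Finite rho) (Lub_Rbar E).
Proof.
  intros Hq Hr. destruct (Lub_Rbar_correct E) as [U _].
  eapply Rbar_le_trans; [| apply (U q Hq)]. simpl. exact Hr.
Qed.

Lemma ratio_lb2 alpha beta rho : validb alpha beta -> 0 <= rho ->
  rho ^ 2 * kkf alpha beta ^ 2 <= Nf (tan alpha) (muf alpha beta) ->
  1 - tan alpha ^ 2 < muf alpha beta * (1 + tan alpha ^ 2) ->
  let r := r0T (tan alpha) (muf alpha beta) in
  good_input_r 2 (seq2 r) r /\ rho <= ALG_hedge alpha beta 2 (seq2 r) / OPT alpha 2 (seq2 r).
Proof.
  intros V Hrho HN Hc r.
  pose proof V as (HT & Hsb & Hcb & Hba).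
  pose proof (kkf_pos _ _ V) as Hkk. pose proof (muf_bounds _ _ V) as Hmu.
  destruct (r0T_props (tan alpha) (muf alpha beta) HT Hmu Hc) as (Hr & Hrc & Hre).
  fold r in Hr, Hrc, Hre.
  pose proof (seq2_good r Hr) as G. split; [exact G|].
  pose proof (OPT_bounds alpha 2 (seq2 r) r HT G) as (_ & O2 & O3). specialize (O2 Hrc).
  assert (EO : OPT alpha 2 (seq2 r) = sqrt (Dsq (tan alpha) r)) by lra.
  rewrite (alg_seq2 alpha beta r _ HT Hsb Hcb Hba (lamf_eq _ _ V) Hr). rewrite EO.
  fold (kkf alpha beta). replace (1 - lamf alpha beta) with (muf alpha beta) by reflexivity.
  set (T := tan alpha) in *. set (kk := kkf alpha beta) in *. set (mu := muf alpha beta) in *.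
  assert (HDs : 0 < Dsq T r).
  { unfold Dsq. apply Rdiv_lt_0_compat; [nra | nra]. }
  pose proof (sqrt_lt_R0 _ HDs) as Hsq.
  apply (Rmult_le_reg_r (sqrt (Dsq T r))); [exact Hsq|].
  unfold Rdiv at 1. rewrite Rmult_assoc, Rinv_l by lra. rewrite Rmult_1_r.
  apply sqrt_le_sq; [apply Rmult_le_pos; [nra | apply Rlt_le, Rinv_0_lt_compat; lra] | exact Hrho | lra |].
  set (M := (r - 1) ^ 2 * T ^ 2 + (1 + r) ^ 2).
  assert (HM : 0 <= M) by (unfold M; nra).
  assert (Id : Nf T mu * M - 4 * T ^ 2 * (1 + mu * r) ^ 2 =
         (r * (1 + T ^ 2 - mu * (1 - T ^ 2)) - (mu * (1 + T ^ 2) - 1 + T ^ 2)) ^ 2)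
        by (unfold Nf, M; ring).
  rewrite Hre in Id.
  replace (mu * (1 + T ^ 2) - (1 - T ^ 2) - (mu * (1 + T ^ 2) - 1 + T ^ 2)) with 0 in Id by ring.
  assert (K : rho ^ 2 * kk ^ 2 * M <= 4 * T ^ 2 * (1 + mu * r) ^ 2).
  { assert (rho ^ 2 * kk ^ 2 * M <= Nf T mu * M) by (apply Rmult_le_compat_r; lra). simpl in Id. lra. }
  unfold Dsq. fold M.
  replace (((1 + mu * r) / kk) ^ 2) with ((4 * T ^ 2 * (1 + mu * r) ^ 2) / (4 * T ^ 2 * kk ^ 2)) by (field; lra).
  replace (rho ^ 2 * (M / (4 * T ^ 2))) with ((rho ^ 2 * kk ^ 2 * M) / (4 * T ^ 2 * kk ^ 2)) by (field; lra).
  assert (P4 : 0 < 4 * T ^ 2 * kk ^ 2).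
  { apply Rmult_lt_0_compat; [apply Rmult_lt_0_compat; [lra | apply pow_lt; lra] | apply pow_lt; lra]. }
  apply Rmult_le_compat_r; [apply Rlt_le, Rinv_0_lt_compat; exact P4 | exact K].
Qed.

Lemma ratio_lb1 alpha beta rho : validb alpha beta -> 0 <= rho ->
  rho ^ 2 * kkf alpha beta ^ 2 * (1 + tan alpha ^ 2) <= 4 * tan alpha ^ 2 ->
  tan alpha <= 1 ->
  good_input_r 1 seq1 0 /\ rho <= ALG_hedge alpha beta 1 seq1 / OPT alpha 1 seq1.
Proof.
  intros V Hrho HN HT1.
  pose proof V as (HT & Hsb & Hcb & Hba).
  pose proof (kkf_pos _ _ V) as Hkk.
  split; [exact seq1_good|].
  pose proof (OPT_bounds alpha 1 seq1 0 HT seq1_good) as (_ & O2 & O3).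
  specialize (O2 ltac:(nra)).
  assert (EO : OPT alpha 1 seq1 = sqrt (Dsq (tan alpha) 0)) by lra.
  rewrite (alg_seq1 alpha beta HT Hsb Hcb Hba). rewrite EO. fold (kkf alpha beta).
  set (T := tan alpha) in *. set (kk := kkf alpha beta) in *.
  assert (HDs : 0 < Dsq T 0) by (unfold Dsq; apply Rdiv_lt_0_compat; nra).
  pose proof (sqrt_lt_R0 _ HDs) as Hsq.
  apply (Rmult_le_reg_r (sqrt (Dsq T 0))); [exact Hsq|].
  unfold Rdiv at 1. rewrite Rmult_assoc, Rinv_l by lra. rewrite Rmult_1_r.
  apply sqrt_le_sq; [apply Rlt_le, Rdiv_lt_0_compat; lra | exact Hrho | lra |].
  unfold Dsq.
  replace ((1 / kk) ^ 2) with (4 * T ^ 2 / (4 * T ^ 2 * kk ^ 2)) by (field; lra).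
  replace (rho ^ 2 * (((0 - 1) ^ 2 * T ^ 2 + (1 + 0) ^ 2) / (4 * T ^ 2)))
    with (rho ^ 2 * kk ^ 2 * (1 + T ^ 2) / (4 * T ^ 2 * kk ^ 2)) by (field; lra).
  assert (P4 : 0 < 4 * T ^ 2 * kk ^ 2).
  { apply Rmult_lt_0_compat; [apply Rmult_lt_0_compat; [lra | apply pow_lt; lra] | apply pow_lt; lra]. }
  apply Rmult_le_compat_r; [apply Rlt_le, Rinv_0_lt_compat; exact P4 | exact HN].
Qed.

Definition Kf (T mu : R) := T ^ 2 * mu ^ 2 + (2 - mu) ^ 2.
Definition Phi (T mu : R) := Nf T mu * Kf T mu.
Definition Pc (c mu : R) := (mu ^ 2 - 2 * c * mu + 1) * (mu ^ 2 - 2 * (1 + c) * mu + 2 * (1 + c)).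

Lemma Pc_diff c mu mu' :
  Pc c mu - Pc c mu' =
  ((mu - / 2 - c) ^ 2 - (mu' - / 2 - c) ^ 2) *
  ((mu - / 2 - c) ^ 2 + (mu' - / 2 - c) ^ 2 + 3 / 2 - 2 * c ^ 2).
Proof. unfold Pc. field. Qed.

Lemma Pc_mid c mu : - / 2 <= c <= / 2 -> Pc c (/ 2 + c) <= Pc c mu.
Proof.
  intros Hc. pose proof (Pc_diff c mu (/ 2 + c)) as E.
  replace (/ 2 + c - / 2 - c) with 0 in E by ring.
  assert (0 <= (mu - / 2 - c) ^ 2 * ((mu - / 2 - c) ^ 2 + 3 / 2 - 2 * c ^ 2)).
  { apply Rmult_le_pos; [apply pow2_ge_0|]. pose proof (pow2_ge_0 (mu - / 2 - c)). nra. }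
  replace (((mu - / 2 - c) ^ 2 - 0 ^ 2) * ((mu - / 2 - c) ^ 2 + 0 ^ 2 + 3 / 2 - 2 * c ^ 2))
    with ((mu - / 2 - c) ^ 2 * ((mu - / 2 - c) ^ 2 + 3 / 2 - 2 * c ^ 2)) in E by ring.
  lra.
Qed.

Lemma Pc_hi c mu : / 2 <= c < 1 -> mu <= 1 -> Pc c 1 <= Pc c mu.
Proof.
  intros Hc Hmu. pose proof (Pc_diff c mu 1) as E.
  assert (H1 : (1 - / 2 - c) ^ 2 <= (mu - / 2 - c) ^ 2) by nra.
  assert (H2 : 0 <= (mu - / 2 - c) ^ 2 + (1 - / 2 - c) ^ 2 + 3 / 2 - 2 * c ^ 2) by nra.
  assert (0 <= ((mu - / 2 - c) ^ 2 - (1 - / 2 - c) ^ 2) *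
     ((mu - / 2 - c) ^ 2 + (1 - / 2 - c) ^ 2 + 3 / 2 - 2 * c ^ 2)) by (apply Rmult_le_pos; lra).
  lra.
Qed.

Lemma Pc_lo c mu : -1 < c <= - / 2 -> 0 <= mu -> Pc c 0 <= Pc c mu.
Proof.
  intros Hc Hmu. pose proof (Pc_diff c mu 0) as E.
  assert (H1 : (0 - / 2 - c) ^ 2 <= (mu - / 2 - c) ^ 2) by nra.
  assert (H2 : 0 <= (mu - / 2 - c) ^ 2 + (0 - / 2 - c) ^ 2 + 3 / 2 - 2 * c ^ 2) by nra.
  assert (0 <= ((mu - / 2 - c) ^ 2 - (0 - / 2 - c) ^ 2) *
     ((mu - / 2 - c) ^ 2 + (0 - / 2 - c) ^ 2 + 3 / 2 - 2 * c ^ 2)) by (apply Rmult_le_pos; lra).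
  lra.
Qed.

Lemma Phi_Pc T mu : 0 < T -> Phi T mu = (1 + T ^ 2) ^ 2 * Pc ((1 - T ^ 2) / (1 + T ^ 2)) mu.
Proof. intros HT. unfold Phi, Nf, Kf, Pc. field. nra. Qed.

Lemma K_mono T mu : 0 < T -> 0 <= mu -> mu * (1 + T ^ 2) <= 1 - T ^ 2 ->
  Kf T ((1 - T ^ 2) / (1 + T ^ 2)) <= Kf T mu.
Proof.
  intros HT Hmu H. set (c := (1 - T ^ 2) / (1 + T ^ 2)).
  assert (Hc : c * (1 + T ^ 2) = 1 - T ^ 2) by (unfold c; field; nra).
  assert (E : Kf T mu - Kf T c = (mu - c) * ((1 + T ^ 2) * (mu + c) - 4)) by (unfold Kf; ring).
  assert (mu <= c) by (apply (Rmult_le_reg_r (1 + T ^ 2)); nra).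
  assert ((1 + T ^ 2) * (mu + c) - 4 <= 0) by nra.
  nra.
Qed.

Lemma Phi_c T : 0 < T -> Phi T ((1 - T ^ 2) / (1 + T ^ 2)) * (1 + T ^ 2) =
   4 * T ^ 2 * Kf T ((1 - T ^ 2) / (1 + T ^ 2)).
Proof. intros HT. unfold Phi, Nf. field. nra. Qed.

Lemma kk_K alpha beta : validb alpha beta ->
  kkf alpha beta ^ 2 * Kf (tan alpha) (muf alpha beta) = 4 * tan alpha ^ 2.
Proof.
  intros V. pose proof (kkf_pos _ _ V) as Hk. pose proof (sc1 beta) as S.
  unfold Kf, muf, lamf. unfold kkf in *.
  replace (4 * tan alpha ^ 2) with (4 * tan alpha ^ 2 * (sin beta ^ 2 + cos beta ^ 2)) by (rewrite S; ring).
  field. lra.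
Qed.

Lemma alpha_basics alpha : 0 < alpha < PI / 2 ->
  0 < cos alpha /\ 0 < sin alpha /\ tan alpha = sin alpha / cos alpha /\ 0 < tan alpha /\
  cos (2 * alpha) = (1 - tan alpha ^ 2) / (1 + tan alpha ^ 2) /\
  sin alpha ^ 2 = tan alpha ^ 2 / (1 + tan alpha ^ 2) /\
  cos alpha ^ 2 = 1 / (1 + tan alpha ^ 2).
Proof.
  intros Ha.
  assert (Hc : 0 < cos alpha) by (apply cos_gt_0; lra).
  assert (Hs : 0 < sin alpha) by (apply sin_gt_0; lra).
  pose proof (sc1 alpha) as S.
  assert (HT : tan alpha = sin alpha / cos alpha) by reflexivity.
  assert (HTp : 0 < tan alpha) by (rewrite HT; apply Rdiv_lt_0_compat; lra).
  assert (S' : cos alpha ^ 2 + sin alpha ^ 2 = 1) by lra.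
  assert (Hp : 0 < cos alpha ^ 2 + sin alpha ^ 2) by lra.
  repeat split; auto.
  - rewrite cos_2a. transitivity ((cos alpha ^ 2 - sin alpha ^ 2) / (cos alpha ^ 2 + sin alpha ^ 2)).
    + rewrite S'. field.
    + rewrite HT. field. split; lra.
  - transitivity (sin alpha ^ 2 / (cos alpha ^ 2 + sin alpha ^ 2)).
    + rewrite S'. field.
    + rewrite HT. field. split; lra.
  - transitivity (cos alpha ^ 2 / (cos alpha ^ 2 + sin alpha ^ 2)).
    + rewrite S'. field.
    + rewrite HT. field. split; lra.
Qed.

Lemma A_eq alpha beta : validb alpha beta ->
  2 * tan beta / (tan alpha + tan beta) = muf alpha beta.
Proof.
  intros V. pose proof V as (HT & Hsb & Hcb & Hba). pose proof (kkf_pos _ _ V) as Hk.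
  unfold muf, lamf, kkf in *.
  replace (tan beta) with (sin beta / cos beta) by reflexivity.
  assert (E : tan alpha + sin beta / cos beta = (sin beta + tan alpha * cos beta) / cos beta) by (field; lra).
  rewrite E. field. split; lra.
Qed.

Lemma kk_eq alpha beta : validb alpha beta ->
  cos beta * (tan alpha + tan beta) = kkf alpha beta.
Proof.
  intros V. pose proof V as (HT & Hsb & Hcb & Hba). unfold kkf.
  replace (tan beta) with (sin beta / cos beta) by reflexivity. field. lra.
Qed.

Lemma D_pos T mu : 0 < T -> 0 <= mu <= 1 -> 0 < (1 + T ^ 2) - mu * (1 - T ^ 2).
Proof. intros HT Hmu. destruct (Rle_lt_dec 0 (1 - T ^ 2)); nra. Qed.

Lemma N_pos T mu : 0 < T -> 0 < Nf T mu.
Proof. intros HT. unfold Nf. pose proof (pow2_ge_0 (1 - mu)).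
  destruct (Req_dec mu (-1)) as [->|Hm].
  - nra.
  - assert (0 < (1 + mu) ^ 2) by (apply pow2_gt_0; lra). assert (0 < T ^ 2) by (apply pow_lt; lra). nra.
Qed.

Lemma r0_eq alpha beta : 0 < alpha < PI / 2 -> validb alpha beta ->
  r0 alpha beta = r0T (tan alpha) (muf alpha beta).
Proof.
  intros Ha V. destruct (alpha_basics alpha Ha) as (Hc & Hs & HT & HTp & Hc2 & Hs2 & Hca2).
  pose proof (muf_bounds _ _ V) as Hmu. pose proof (D_pos _ _ HTp Hmu) as HD.
  unfold r0. cbv zeta. rewrite A_eq by auto. rewrite Hc2. unfold r0T.
  set (mu := muf alpha beta) in *. set (T := tan alpha) in *.
  assert (E : 2 - mu * (2 * ((1 - T ^ 2) / (1 + T ^ 2))) = 2 * ((1 + T ^ 2) - mu * (1 - T ^ 2)) / (1 + T ^ 2))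
    by (field; nra).
  rewrite E. field. split; nra.
Qed.

Lemma f1_val alpha beta : 0 < alpha < PI / 2 -> validb alpha beta ->
  0 <= f1 alpha beta (r0 alpha beta) /\
  f1 alpha beta (r0 alpha beta) ^ 2 * kkf alpha beta ^ 2 = Nf (tan alpha) (muf alpha beta).
Proof.
  intros Ha V. destruct (alpha_basics alpha Ha) as (Hc & Hs & HT & HTp & Hc2 & Hs2 & Hca2).
  pose proof (muf_bounds _ _ V) as Hmu. pose proof (D_pos _ _ HTp Hmu) as HD.
  pose proof (kkf_pos _ _ V) as Hk. pose proof (N_pos (tan alpha) (muf alpha beta) HTp) as HN.
  rewrite r0_eq by auto. unfold f1. rewrite A_eq, kk_eq, Hc2 by auto.
  set (mu := muf alpha beta) in *. set (T := tan alpha) in *. set (kk := kkf alpha beta) in *.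
  assert (EY : 1 + mu * r0T T mu = Nf T mu / ((1 + T ^ 2) - mu * (1 - T ^ 2)))
    by (unfold r0T, Nf; field; lra).
  assert (EQ : 1 + r0T T mu ^ 2 + 2 * ((1 - T ^ 2) / (1 + T ^ 2)) * r0T T mu =
               4 * T ^ 2 * Nf T mu / ((1 + T ^ 2) * ((1 + T ^ 2) - mu * (1 - T ^ 2)) ^ 2))
    by (unfold r0T, Nf; field; split; nra).
  set (D := (1 + T ^ 2) - mu * (1 - T ^ 2)) in *.
  rewrite EY, EQ.
  assert (HQ : 0 < 4 * T ^ 2 * Nf T mu / ((1 + T ^ 2) * D ^ 2)).
  { apply Rdiv_lt_0_compat.
    - apply Rmult_lt_0_compat; [apply Rmult_lt_0_compat; [lra | apply pow_lt; lra] | lra].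
    - apply Rmult_lt_0_compat; [nra | apply pow_lt; lra]. }
  set (Q := 4 * T ^ 2 * Nf T mu / ((1 + T ^ 2) * D ^ 2)) in *.
  pose proof (sqrt_lt_R0 _ HQ) as HsQ. pose proof (sqrt_sqrt _ (Rlt_le _ _ HQ)) as HsQ2.
  split.
  - apply Rmult_le_pos; [apply Rmult_le_pos; [lra | apply Rlt_le, Rinv_0_lt_compat; lra] |].
    apply Rmult_le_pos; [apply Rlt_le, Rdiv_lt_0_compat; lra | apply Rlt_le, Rinv_0_lt_compat; lra].
  - replace ((2 * sin alpha / kk * (Nf T mu / D / sqrt Q)) ^ 2 * kk ^ 2)
      with (4 * sin alpha ^ 2 * (Nf T mu / D) ^ 2 / (sqrt Q * sqrt Q)) by (field; lra).
    rewrite HsQ2, Hs2. unfold Q. field. repeat split; nra.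
Qed.

Lemma cos_le_dec x y : 0 <= x -> x <= y -> y <= PI -> cos y <= cos x.
Proof.
  intros H1 H2 H3. destruct (Req_dec x y) as [->|Hne]; [lra|].
  apply Rlt_le, cos_decreasing_1; lra.
Qed.

Lemma cos_2PI3 : cos (2 * PI / 3) = - / 2.
Proof.
  replace (2 * PI / 3) with (- (PI / 3) + PI) by field.
  rewrite neg_cos, cos_neg, cos_PI3. field.
Qed.

Lemma regions alpha : 0 < alpha < PI / 2 ->
  (alpha <= PI / 6 -> / 2 <= cos (2 * alpha)) /\
  (PI / 6 <= alpha -> cos (2 * alpha) <= / 2) /\
  (alpha <= PI / 3 -> - / 2 <= cos (2 * alpha)) /\
  (PI / 3 <= alpha -> cos (2 * alpha) <= - / 2) /\
  (PI / 6 < alpha -> cos (2 * alpha) < / 2) /\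
  (alpha < PI / 3 -> - / 2 < cos (2 * alpha)).
Proof.
  intros Ha. pose proof PI_RGT_0 as HPI.
  assert (C1 : cos (PI / 3) = / 2) by (rewrite cos_PI3; field).
  pose proof cos_2PI3 as C2.
  repeat split; intros Hh.
  - rewrite <- C1. apply cos_le_dec; lra.
  - rewrite <- C1. apply cos_le_dec; lra.
  - rewrite <- C2. apply cos_le_dec; lra.
  - rewrite <- C2. apply cos_le_dec; lra.
  - rewrite <- C1. apply cos_decreasing_1; lra.
  - rewrite <- C2. apply cos_decreasing_1; lra.
Qed.

Lemma muf_alt alpha beta : validb alpha beta -> muf alpha beta = 2 * sin beta / kkf alpha beta.
Proof. intros V. pose proof (kkf_pos _ _ V). pose proof (muf_eq _ _ V). field_simplify_eq; lra. Qed.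

Lemma mid_beta alpha : 0 < alpha < PI / 2 -> - / 2 < cos (2 * alpha) < / 2 ->
  let b := / 2 * acos ((- 2 * cos (4 * alpha) + cos (6 * alpha) + 2) / (3 - 2 * cos (4 * alpha))) in
  validb alpha b /\ muf alpha b = / 2 + cos (2 * alpha).
Proof.
  intros Ha Hc b.
  destruct (alpha_basics alpha Ha) as (Hca & Hsa & HT & HTp & _ & _ & _).
  set (c := cos (2 * alpha)) in *.
  assert (C4 : cos (4 * alpha) = 2 * c ^ 2 - 1).
  { replace (4 * alpha) with (2 * (2 * alpha)) by ring. rewrite cos_2a_cos. fold c. ring. }
  assert (S2 : sin (2 * alpha) ^ 2 = 1 - c ^ 2) by (pose proof (sc1 (2 * alpha)); fold c in H; lra).
  assert (C6 : cos (6 * alpha) = 4 * c ^ 3 - 3 * c).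
  { replace (6 * alpha) with (2 * alpha + 2 * (2 * alpha)) by ring.
    rewrite cos_plus. rewrite (cos_2a_cos (2 * alpha)), (sin_2a (2 * alpha)). fold c.
    replace (sin (2 * alpha) * (2 * sin (2 * alpha) * c)) with (2 * c * sin (2 * alpha) ^ 2) by ring.
    rewrite S2. ring. }
  assert (H5 : 0 < 5 - 4 * c ^ 2) by nra.
  set (k0 := (- 2 * cos (4 * alpha) + cos (6 * alpha) + 2) / (3 - 2 * cos (4 * alpha))) in *.
  assert (Ek : k0 = (4 * c ^ 3 - 4 * c ^ 2 - 3 * c + 4) / (5 - 4 * c ^ 2)).
  { unfold k0. rewrite C4, C6. field. lra. }
  assert (E1m : 1 - k0 = (1 - c) * (1 + 2 * c) ^ 2 / (5 - 4 * c ^ 2)) by (rewrite Ek; field; lra).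
  assert (E1p : 1 + k0 = (1 + c) * (3 - 2 * c) ^ 2 / (5 - 4 * c ^ 2)) by (rewrite Ek; field; lra).
  assert (Hk1 : 0 <= 1 - k0) by (rewrite E1m; apply Rmult_le_pos; [apply Rmult_le_pos; [lra | apply pow2_ge_0] | apply Rlt_le, Rinv_0_lt_compat; lra]).
  assert (Hk2 : 0 < 1 + k0) by (rewrite E1p; apply Rdiv_lt_0_compat; [apply Rmult_lt_0_compat; [lra | apply pow_lt; lra] | lra]).
  pose proof (cos_acos k0 ltac:(lra)) as Cth. pose proof (acos_bound k0) as Bth.
  assert (Hb2 : 2 * b = acos k0) by (unfold b; field).
  assert (Cb2 : cos b ^ 2 = (1 + k0) / 2).
  { pose proof (cos_2a_cos b) as E. rewrite Hb2, Cth in E. lra. }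
  assert (Sb2 : sin b ^ 2 = (1 - k0) / 2).
  { pose proof (cos_2a_sin b) as E. rewrite Hb2, Cth in E. lra. }
  pose proof PI_RGT_0.
  assert (Hsb : 0 <= sin b) by (apply sin_ge_0; lra).
  assert (Hcb0 : 0 <= cos b) by (apply cos_ge_0; lra).
  assert (Hcb : 0 < cos b).
  { destruct (Req_dec (cos b) 0) as [E|E]; [| lra]. exfalso. rewrite E in Cb2. lra. }
  assert (Ca2 : cos alpha ^ 2 = (1 + c) / 2) by (unfold c; rewrite cos_2a_cos; field).
  assert (Sa2 : sin alpha ^ 2 = (1 - c) / 2) by (unfold c; rewrite cos_2a_sin; field).
  set (X := sin b * cos alpha). set (Y := sin alpha * cos b).
  assert (HX : 0 <= X) by (unfold X; nra).
  assert (HY : 0 < Y) by (unfold Y; nra).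
  assert (EXY : X * (3 - 2 * c) = (1 + 2 * c) * Y).
  { apply Rsqr_inj; [nra | nra |]. unfold Rsqr.
    replace (X * (3 - 2 * c) * (X * (3 - 2 * c))) with (sin b ^ 2 * cos alpha ^ 2 * (3 - 2 * c) ^ 2) by (unfold X; ring).
    replace ((1 + 2 * c) * Y * ((1 + 2 * c) * Y)) with ((1 + 2 * c) ^ 2 * sin alpha ^ 2 * cos b ^ 2) by (unfold Y; ring).
    rewrite Sb2, Cb2, Ca2, Sa2, E1m, E1p. field. lra. }
  assert (V : validb alpha b).
  { repeat split; auto. rewrite HT.
    apply (Rmult_le_reg_r (cos alpha)); [lra|].
    replace (sin alpha / cos alpha * cos b * cos alpha) with Y by (unfold Y; field; lra).
    fold X. nra. }
  split; [exact V|].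
  rewrite muf_alt by exact V. unfold kkf. rewrite HT.
  replace (2 * sin b / (sin b + sin alpha / cos alpha * cos b)) with (2 * X / (X + Y))
    by (unfold X, Y; field; split; [lra | nra]).
  apply (Rmult_eq_reg_r (X + Y)); [| lra]. field_simplify; [| lra]. nra.
Qed.

Lemma beta0_facts alpha : 0 < alpha < PI / 2 ->
  let b := beta0 alpha in let T := tan alpha in let mu := muf alpha b in
  validb alpha b /\ 0 <= rho_hedge alpha /\ rho_hedge alpha ^ 2 * kkf alpha b ^ 2 = Nf T mu /\
  (forall m, 0 <= m <= 1 -> Phi T mu <= Phi T m) /\ 1 - T ^ 2 < mu * (1 + T ^ 2) /\
  (alpha <= PI / 6 -> mu = 1) /\ (PI / 3 <= alpha -> mu = 0).
Proof.
  intros Ha b T mu.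
  destruct (alpha_basics alpha Ha) as (Hca & Hsa & HT & HTp & Hc2 & Hs2 & Hca2).
  destruct (regions alpha Ha) as (R1 & R2 & R3 & R4 & R5 & R6).
  fold T in HT, HTp, Hc2, Hs2, Hca2.
  set (c := cos (2 * alpha)) in *.
  assert (Hc1 : -1 < c < 1).
  { rewrite Hc2. split; apply (Rmult_lt_reg_r (1 + T ^ 2)); try nra;
    unfold Rdiv; rewrite Rmult_assoc, Rinv_l by nra; nra. }
  pose proof PI_RGT_0 as HPI.
  assert (Hb : validb alpha b /\
     ((mu = 1 /\ / 2 <= c) \/ (mu = / 2 + c /\ - / 2 <= c <= / 2) \/ (mu = 0 /\ c <= - / 2)) /\
     (alpha <= PI / 6 -> mu = 1) /\ (PI / 3 <= alpha -> mu = 0)).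
  { unfold mu, b, beta0.
    destruct (Rle_dec alpha (PI / 6)) as [H6|H6].
    - assert (V : validb alpha alpha).
      { unfold validb. fold T. split; [exact HTp|]. split; [lra|]. split; [lra|].
        apply Req_le. rewrite HT. field. lra. }
      assert (M1 : muf alpha alpha = 1).
      { unfold muf, lamf. fold T. rewrite HT.
        replace (sin alpha / cos alpha * cos alpha - sin alpha) with 0 by (field; lra). unfold Rdiv. ring. }
      rewrite M1. split; [exact V|]. split; [left; split; [reflexivity | apply R1; lra]|].
      split; [reflexivity|]. intros; lra.
    - destruct (Rlt_dec alpha (PI / 3)) as [H3|H3].
      + destruct (mid_beta alpha Ha ltac:(split; [apply R6; lra | apply R5; lra])) as [V M].
        fold c in M. rewrite M. split; [exact V|].
        split; [right; left; split; [reflexivity | split; [apply R3; lra | apply R2; lra]]|].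
        split; intros; lra.
      + assert (V : validb alpha 0).
        { unfold validb. rewrite sin_0, cos_0. fold T. split; [exact HTp|]. split; [lra|]. split; lra. }
        assert (M0 : muf alpha 0 = 0).
        { unfold muf, lamf, kkf. rewrite sin_0, cos_0. field. fold T. lra. }
        rewrite M0. split; [exact V|]. split; [right; right; split; [reflexivity | apply R4; lra]|].
        split; intros; lra. }
  destruct Hb as (V & Hcase & Hm1 & Hm0).
  pose proof (kkf_pos _ _ V) as Hkk.
  split; [exact V|].
  assert (Hrho : 0 <= rho_hedge alpha /\ rho_hedge alpha ^ 2 * kkf alpha b ^ 2 = Nf T mu).
  { unfold rho_hedge.
    destruct (Rlt_dec alpha (PI / 6)) as [H6|H6].
    - assert (Eb : b = alpha) by (unfold b, beta0; destruct (Rle_dec alpha (PI / 6)); [reflexivity | lra]).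
      assert (Em : mu = 1) by (apply Hm1; lra).
      rewrite Em. unfold kkf. rewrite Eb. fold T. split.
      + apply Rlt_le, Rinv_0_lt_compat; lra.
      + unfold Nf. rewrite HT. field. lra.
    - destruct (Rle_dec alpha (PI / 3)) as [H3|H3].
      + pose proof (f1_val alpha b Ha V) as [F1 F2]. fold T mu in F2. split; [exact F1 | exact F2].
      + assert (Eb : b = 0) by (unfold b, beta0; destruct (Rle_dec alpha (PI / 6)); [lra|];
                                 destruct (Rlt_dec alpha (PI / 3)); [lra | reflexivity]).
        assert (Em : mu = 0) by (apply Hm0; lra).
        rewrite Em. unfold kkf. rewrite Eb, sin_0, cos_0. fold T. split.
        * apply Rlt_le, Rinv_0_lt_compat; lra.
        * unfold Nf. rewrite HT. pose proof (sc1 alpha) as S.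
          transitivity (1 / cos alpha ^ 2); [field; lra|].
          transitivity ((sin alpha ^ 2 + cos alpha ^ 2) / cos alpha ^ 2); [rewrite S; reflexivity|].
          field. lra. }
  destruct Hrho as [Hr1 Hr2]. split; [exact Hr1|]. split; [exact Hr2|].
  assert (Ec : c = (1 - T ^ 2) / (1 + T ^ 2)) by exact Hc2.
  split.
  - intros m Hm. rewrite !(Phi_Pc T) by exact HTp. rewrite <- Ec.
    apply Rmult_le_compat_l; [nra|].
    destruct Hcase as [[-> Hc]|[[-> Hc]|[-> Hc]]].
    + apply Pc_hi; lra.
    + apply Pc_mid; lra.
    + apply Pc_lo; lra.
  - split; [| split; assumption].
    assert (Hc' : c * (1 + T ^ 2) = 1 - T ^ 2) by (rewrite Ec; field; nra).
    destruct Hcase as [[-> Hc]|[[-> Hc]|[-> Hc]]]; nra.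
Qed.

Lemma K_pos T mu : 0 <= mu <= 1 -> 0 < Kf T mu.
Proof. intros H. unfold Kf. assert (0 <= T ^ 2 * mu ^ 2) by (apply Rmult_le_pos; apply pow2_ge_0). nra. Qed.

Lemma valid_beta alpha beta : 0 < alpha < PI / 2 -> 0 <= beta <= alpha -> validb alpha beta.
Proof.
  intros Ha Hb. destruct (alpha_basics alpha Ha) as (Hca & Hsa & HT & HTp & _ & _ & _).
  pose proof PI_RGT_0.
  assert (Hs : 0 <= sin beta) by (apply sin_ge_0; lra).
  assert (Hc : 0 < cos beta) by (apply cos_gt_0; lra).
  assert (Hd : 0 <= sin (alpha - beta)) by (apply sin_ge_0; lra).
  rewrite sin_minus in Hd.
  unfold validb. split; [exact HTp|]. split; [exact Hs|]. split; [exact Hc|].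
  rewrite HT. apply (Rmult_le_reg_r (cos alpha)); [lra|].
  replace (sin alpha / cos alpha * cos beta * cos alpha) with (sin alpha * cos beta) by (field; lra).
  lra.
Qed.

Theorem theorem3 (alpha : R) (Ha : 0 < alpha < PI / 2) :
  (forall beta, 0 <= beta <= alpha ->
     Rbar_le (comp_ratio alpha (beta0 alpha)) (comp_ratio alpha beta)) /\
  comp_ratio alpha (beta0 alpha) = Finite (rho_hedge alpha) /\
  comp_ratio_r alpha (beta0 alpha) (r0 alpha (beta0 alpha)) = Finite (rho_hedge alpha) /\
  (alpha <= PI / 6 -> r0 alpha (beta0 alpha) = 1) /\
  (PI / 3 <= alpha -> r0 alpha (beta0 alpha) = - cos (2 * alpha)).
Proof.
  destruct (beta0_facts alpha Ha) as (V & Hr0 & Hrk & Hphi & Hcmu & Hm1 & Hm0).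
  destruct (alpha_basics alpha Ha) as (Hca & Hsa & HT & HTp & Hc2 & Hs2 & Hca2).
  set (b0 := beta0 alpha) in *. set (rho := rho_hedge alpha) in *.
  set (T := tan alpha) in *. set (mu0 := muf alpha b0) in *.
  assert (HUB : forall n x, good_input n x -> ALG_hedge alpha b0 n x / OPT alpha n x <= rho).
  { intros n x G. apply ratio_ub; auto. fold T mu0. lra. }
  pose proof (ratio_lb2 alpha b0 rho V Hr0 ltac:(fold T mu0; lra) Hcmu) as LB. cbv zeta in LB.
  fold T mu0 in LB. destruct LB as [G2 Hq].
  assert (HR0 : r0 alpha b0 = r0T T mu0) by (apply r0_eq; auto).
  assert (HC : comp_ratio alpha b0 = Finite rho).
  { unfold comp_ratio. apply is_lub_Rbar_unique. split.
    - intros q (n & x & G & ->). simpl. apply HUB; auto.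
    - intros bb Hub. eapply Rbar_le_trans; [| apply Hub].
      + simpl. exact Hq.
      + exists 2%nat, (seq2 (r0T T mu0)). split; [exists (r0T T mu0); exact G2 | reflexivity]. }
  split; [| split; [exact HC | split; [| split]]].
  - intros beta Hb. rewrite HC.
    pose proof (valid_beta alpha beta Ha Hb) as Vb.
    pose proof (muf_bounds _ _ Vb) as Hmu.
    pose proof (kk_K _ _ V) as KK0. pose proof (kk_K _ _ Vb) as KK.
    fold T mu0 in KK0. fold T in KK.
    set (mu := muf alpha beta) in *. set (kk := kkf alpha beta) in *. set (kk0 := kkf alpha b0) in *.
    pose proof (K_pos T mu Hmu) as HK.
    assert (Hrho2 : rho ^ 2 * (4 * T ^ 2) = Phi T mu0).
    { rewrite <- KK0. unfold Phi. rewrite <- Hrk. ring. }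
    unfold comp_ratio.
    destruct (Rlt_le_dec (1 - T ^ 2) (mu * (1 + T ^ 2))) as [Hc | Hc].
    + assert (N1 : rho ^ 2 * kk ^ 2 <= Nf T mu).
      { apply (Rmult_le_reg_r (Kf T mu)); [exact HK|].
        replace (rho ^ 2 * kk ^ 2 * Kf T mu) with (rho ^ 2 * (kk ^ 2 * Kf T mu)) by ring.
        rewrite KK. rewrite Hrho2. apply Hphi. exact Hmu. }
      pose proof (ratio_lb2 alpha beta rho Vb Hr0 N1 Hc) as LB'. cbv zeta in LB'.
      destruct LB' as [G' Hq'].
      apply (lub_ge _ _ _ (ex_intro _ 2%nat (ex_intro _ _ (conj (ex_intro _ _ G') eq_refl))) Hq').
    + assert (HT1 : T <= 1) by nra.
      set (c := (1 - T ^ 2) / (1 + T ^ 2)).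
      assert (Hcc : 0 <= c <= 1).
      { unfold c. split.
        - apply Rmult_le_pos; [nra | apply Rlt_le, Rinv_0_lt_compat; nra].
        - apply (Rmult_le_reg_r (1 + T ^ 2)); [nra|]. unfold Rdiv. rewrite Rmult_assoc, Rinv_l by nra. nra. }
      pose proof (Hphi c Hcc) as Pc1. pose proof (Phi_c T HTp) as Pc2. fold c in Pc2.
      pose proof (K_mono T mu HTp (proj1 Hmu) Hc) as Km. fold c in Km.
      assert (N1 : rho ^ 2 * kk ^ 2 * (1 + T ^ 2) <= 4 * T ^ 2).
      { apply (Rmult_le_reg_r (Kf T mu)); [exact HK|].
        replace (rho ^ 2 * kk ^ 2 * (1 + T ^ 2) * Kf T mu) with (rho ^ 2 * (kk ^ 2 * Kf T mu) * (1 + T ^ 2)) by ring.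
        rewrite KK. rewrite Hrho2.
        assert (Phi T mu0 * (1 + T ^ 2) <= Phi T c * (1 + T ^ 2)) by (apply Rmult_le_compat_r; nra).
        assert (4 * T ^ 2 * Kf T c <= 4 * T ^ 2 * Kf T mu) by (apply Rmult_le_compat_l; nra).
        lra. }
      pose proof (ratio_lb1 alpha beta rho Vb Hr0 N1 HT1) as [G' Hq'].
      apply (lub_ge _ _ _ (ex_intro _ 1%nat (ex_intro _ _ (conj (ex_intro _ _ G') eq_refl))) Hq').
  - rewrite HR0. unfold comp_ratio_r. apply is_lub_Rbar_unique. split.
    + intros q (n & x & G & ->). simpl. apply HUB. exists (r0T T mu0). exact G.
    + intros bb Hub. eapply Rbar_le_trans; [| apply Hub].
      * simpl. exact Hq.
      * exists 2%nat, (seq2 (r0T T mu0)). split; [exact G2 | reflexivity].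
  - intros H. rewrite HR0, (Hm1 H). unfold r0T. field. nra.
  - intros H. rewrite HR0, (Hm0 H). rewrite Hc2. unfold r0T. field. nra.
Qed.
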